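(* For every $\lambda=\sum_{i=1}^r m_i\omega_i\in P^+$, the number of elements of $\mathcal B^r(\lambda)$ (equivalently, the number of families $((\ell_{i,j},\mathbf s_{i,j}))_{1\le i\le j\le r}$ satisfying the defining conditions below) equals $\prod_{i=1}^r\binom{r+1}{i}^{m_i}$.
   Context: $\mathfrak g=\mathfrak{sl}_{r+1}(\mathbb C)$, $\omega_i$ fundamental weights, $P^+=\sum\mathbb N\omega_i$, $x^-_{i,j}=E_{j+1,i}$ for $1\le i\le j\le r$. Let $\mathbf F$ be the set of pairs $(\ell,\mathbf s)$ with $\ell\in\mathbb N$ and $\mathbf s=(\mathbf s(1)\le\dots\le\mathbf s(\ell))\in\mathbb N^\ell$ ($\mathbf s=\emptyset$ if $\ell=0$). For $m\in\mathbb Z$: $\mathbf F(m)=\emptyset$ if $m<0$; for $m\ge0$, $\mathbf F(m)$ consists of $(0,\emptyset)$ and the pairs with $\ell>0$, $\mathbf s(\ell)\le m-\ell$. $\mathbf x^-_{i,j}(\ell,\mathbf s)=\prod_{p=1}^\ell(x^-_{i,j}\otimes t^{\mathbf s(p)})\in U(\mathfrak n^-[t])$. $\mathcal B^r(\lambda)$ is the set of ordered products $\prod_{j=1}^r\prod_{i=1}^j\mathbf x^-_{i,j}(\ell_{i,j},\mathbf s_{i,j})$ (ordered by increasing $j$, then increasing $i$) with $(\ell_{i,j},\mathbf s_{i,j})\in\mathbf F(m_{i,j})$ for all $1\le i\le j\le r$, where $m_{i,j}=m_i+\sum_{s=j+1}^r(\ell_{i+1,s}-\ell_{i,s})$; these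 are distinct PBW monomials. *)

(* Defs.v *)
From mathcomp Require Import all_boot all_order all_algebra.
Set Implicit Arguments. Unset Strict Implicit. Unset Printing Implicit Defensive.
Import Order.TTheory GRing.Theory Num.Theory.

(* Indices are 1-based as in the paper: a bfam is a finite function on
   'I_r.+1 * 'I_r.+1; only the entries (i,j) with 1 <= i <= j <= r are
   meaningful, the others are required to be the default (0, [::]).
   An entry is a pair (ell, s) with s : seq nat representing s(1..ell). *)

Definition entry := (nat * seq nat)%type.
Definition empty_entry : entry := (0%N, [::]).

Definition bfam (r : nat) := {ffun 'I_r.+1 * 'I_r.+1 -> entry}.

Definition fam_at (r : nat) (f : bfam r) (i j : nat) : entry :=
  match (insub i : option 'I_r.+1), (insub j : option 'I_r.+1) with
  | Some i', Some j' => f (i', j')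
  | _, _ => empty_entry
  end.

Definition ell (r : nat) (f : bfam r) (i j : nat) : nat := (fam_at f i j).1.

Definition inF (m : int) (p : entry) : bool :=
  (0 <= m)%R &&
  ((p == empty_entry) ||
   [&& (0 < p.1)%N, size p.2 == p.1, sorted leq p.2 &
       ((last 0%N p.2 + p.1)%:Z <= m)%R]).

Definition mij (r : nat) (m : nat -> nat) (f : bfam r) (i j : nat) : int :=
  ((m i)%:Z + \sum_(j.+1 <= s < r.+1) ((ell f i.+1 s)%:Z - (ell f i s)%:Z))%R.

(* the defining conditions of B^r(lambda), lambda = sum_i m_i omega_i *)
Definition valid_family (r : nat) (m : nat -> nat) (f : bfam r) : bool :=
  [forall i : 'I_r.+1, forall j : 'I_r.+1,
     if (1 <= i <= j)%N then inF (mij m f i j) (f (i, j))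
     else f (i, j) == empty_entry].

(* Main.v *)
Require Import Defs.
From mathcomp Require Import all_boot all_order all_algebra.
From mathcomp Require Import zify.
Set Implicit Arguments. Unset Strict Implicit. Unset Printing Implicit Defensive.

Definition mkfam (r : nat) (h : nat -> nat -> entry) : bfam r :=
  [ffun p : 'I_r.+1 * 'I_r.+1 => h (nat_of_ord p.1) (nat_of_ord p.2)].

Lemma fam_at_mk r h i j :
  fam_at (mkfam r h) i j = if (i <= r) && (j <= r) then h i j else empty_entry.
Proof.
rewrite /fam_at; case: (@insubP _ _ (ordinal r.+1) i) => [i' Hi Ei|Hi]; case: (@insubP _ _ (ordinal r.+1) j) => [j' Hj Ej|Hj] /=;
  rewrite ?ltnS in Hi Hj.
- by rewrite ffunE /= Ei Ej Hi Hj.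
- by rewrite Hi (negbTE Hj).
- by rewrite (negbTE Hi).
- by rewrite (negbTE Hi).
Qed.

Lemma fam_at_ord r (f : bfam r) (i j : 'I_r.+1) : fam_at f i j = f (i, j).
Proof. by rewrite /fam_at (valK i) (valK j). Qed.

Lemma fam_at_out r (f : bfam r) i j :
  ~~ ((i <= r) && (j <= r)) -> fam_at f i j = empty_entry.
Proof.
rewrite /fam_at; case: (@insubP _ _ (ordinal r.+1) i) => [i' Hi _|//]; case: (@insubP _ _ (ordinal r.+1) j) => [j' Hj _|//].
by move: Hi Hj; rewrite !ltnS => -> ->.
Qed.

Definition inFn (mu : nat) (e : entry) : bool :=
  [&& size e.2 == e.1, sorted leq e.2 & last 0 e.2 + e.1 <= mu].

Lemma inF_nat (mu : nat) e : inF mu%:Z e = inFn mu e.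
Proof.
case: e => l s; rewrite /inF /inFn /= lez_nat /=.
case: l => [|l] /=; first by case: s.
by [].
Qed.

Lemma inFn_le mu e : inFn mu e -> e.1 <= mu.
Proof. by case/and3P => _ _ H; apply: leq_trans H; apply: leq_addl. Qed.

Lemma inF_le (mu : nat) e : inF mu%:Z e -> e.1 <= mu.
Proof. by rewrite inF_nat; apply: inFn_le. Qed.

Definition gF (mu : nat) (e : entry) : entry := (e.1.+1, rcons e.2 (mu - e.1)).

Fixpoint Flist (mu : nat) : seq entry :=
  if mu is mu'.+1 then Flist mu' ++ [seq gF mu' e | e <- Flist mu'] else [:: empty_entry].

Lemma sorted_rcons_iff (s : seq nat) x :
  sorted leq (rcons s x) = sorted leq s && (last 0 s <= x).
Proof. by case: s => [|a s] //=; rewrite rcons_path. Qed.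

Lemma mem_Flist mu e : (e \in Flist mu) = inFn mu e.
Proof.
elim: mu e => [|mu IH] [l s].
- rewrite /= inE /inFn /=; case: s => [|a s] /=.
  + by case: l.
  + rewrite eqE /= andbF; apply/esym/negbTE.
    apply/negP => /and3P[/eqP Hs _ Hl]; move: Hl; rewrite -Hs /=; lia.
rewrite /= mem_cat IH; apply/idP/idP.
- case/orP => [/and3P[H1 H2 H3]|/mapP[[l' s'] Hin ->]].
  + by rewrite /inFn H1 H2 /=; apply: leqW.
  + move: Hin; rewrite IH /inFn /gF /= size_rcons last_rcons sorted_rcons_iff.
    case/and3P => /eqP -> H2 H3; rewrite eqxx H2 /=.
    apply/andP; split; lia.
- case/and3P => /eqP Hs H2 H3.
  have [Hle|Hgt] := leqP (last 0 s + l) mu.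
  + by rewrite /inFn /= Hs eqxx H2 Hle.
  apply/orP; right; apply/mapP.
  case/lastP: s Hs H2 H3 Hgt => [|s' x] Hs H2 H3 Hgt.
  + by move: Hgt Hs => /= Hgt Hs; lia.
  exists (size s', s').
  + move: H2; rewrite IH /inFn /= eqxx sorted_rcons_iff => /andP[-> Hx] /=.
    move: H3 Hgt Hs; rewrite last_rcons size_rcons => H3 Hgt Hs; lia.
  + move: H3 Hgt Hs; rewrite /gF /= last_rcons size_rcons => H3 Hgt Hs.
    congr (_, rcons _ _); lia.
Qed.

Lemma uniq_Flist mu : uniq (Flist mu).
Proof.
elim: mu => [//|mu IH] /=; rewrite cat_uniq IH /=; apply/andP; split.
- apply/hasPn => e /mapP[e' He' ->]; rewrite /= mem_Flist /inFn /gF /= last_rcons.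
  move: He'; rewrite mem_Flist => /inFn_le H.
  rewrite !negb_and; apply/orP; right; apply/orP; right; lia.
- rewrite map_inj_in_uniq // => [[l1 s1] [l2 s2]] H1 H2 /=; rewrite /gF /=.
  case=> El /rcons_inj [-> _]; by rewrite El.
Qed.

Lemma Flist_weight mu x y :
  \sum_(e <- Flist mu) x ^ (mu - e.1) * y ^ e.1 = (x + y) ^ mu.
Proof.
elim: mu => [|mu IH]; first by rewrite /= big_seq1.
rewrite /= big_cat big_map /=.
rewrite (eq_big_seq (fun e => x * (x ^ (mu - e.1) * y ^ e.1))); last first.
  by move=> e; rewrite mem_Flist => /inFn_le H; rewrite subSn // expnS mulnA.
rewrite (eq_big_seq (F1 := fun e => x ^ (mu.+1 - (gF mu e).1) * y ^ (gF mu e).1)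
  (fun e => y * (x ^ (mu - e.1) * y ^ e.1))); last first.
  by move=> e _; rewrite /gF /= subSS expnS mulnCA.
by rewrite -!big_distrr /= IH expnS mulnDl.
Qed.

Definition extE (r : nat) (c : seq entry) (g : bfam r) (i j : nat) : entry :=
  if j == r.+1 then (if 0 < i then nth empty_entry c i.-1 else empty_entry)
  else fam_at g i j.
Definition extend r (c : seq entry) (g : bfam r) : bfam r.+1 := mkfam r.+1 (extE c g).
Definition res r (f : bfam r.+1) : bfam r := mkfam r (fam_at f).
Definition col r (f : bfam r.+1) : seq entry := [seq fam_at f i r.+1 | i <- iota 1 r.+1].
Definition mp (m : nat -> nat) (c : seq entry) (i : nat) : nat :=
  m i + (nth empty_entry c i).1 - (nth empty_entry c i.-1).1.
Definition colv r (m : nat -> nat) (c : seq entry) : bool :=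
  all (fun k => inF ((m k.+1)%:Z)%R (nth empty_entry c k)) (iota 0 r.+1).

Lemma famE_low r c (g : bfam r) i j : j <= r -> fam_at (extend c g) i j = fam_at g i j.
Proof.
move=> Hj; rewrite fam_at_mk /extE (@ltn_eqF j r.+1 Hj).
case: ifP => // /negbT H; rewrite fam_at_out //; move: H; lia.
Qed.

Lemma famE_col r c (g : bfam r) i : 0 < i -> size c = r.+1 ->
  fam_at (extend c g) i r.+1 = nth empty_entry c i.-1.
Proof.
move=> Hi Hc; rewrite fam_at_mk /extE eqxx Hi leqnn andbT.
case: ifP => // /negbT H; rewrite nth_default // Hc; move: H; lia.
Qed.

Lemma famE_col0 r c (g : bfam r) : fam_at (extend c g) 0 r.+1 = empty_entry.
Proof. by rewrite fam_at_mk /extE eqxx /= leqnn. Qed.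

Lemma mijE_col r m c (g : bfam r) i : mij m (extend c g) i r.+1 = ((m i)%:Z)%R.
Proof. by rewrite /mij big_geq // GRing.addr0. Qed.

Lemma mijE_low r m c (g : bfam r) i j : size c = r.+1 -> 0 < i ->
  (nth empty_entry c i.-1).1 <= m i -> j <= r ->
  mij m (extend c g) i j = mij (mp m c) g i j.
Proof.
move=> Hc Hi Hle Hj; rewrite /mij big_nat_recr //=.
rewrite (eq_big_nat _ _ (F2 := fun s => ((ell g i.+1 s)%:Z - (ell g i s)%:Z)%R)); last first.
  by move=> s /andP[_ Hs]; rewrite /ell !famE_low.
rewrite /ell !famE_col //= /mp.
set S := (\sum_(_ <= _ < _) _)%R.
lia.
Qed.

Lemma validP r m (f : bfam r) :
  reflect (forall i j, i <= r -> j <= r ->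
     if 1 <= i <= j then inF (mij m f i j) (fam_at f i j) else fam_at f i j == empty_entry)
    (valid_family m f).
Proof.
apply: (iffP forallP) => [H i j Hi Hj|H i].
- have Hi' : i < r.+1 by rewrite ltnS.
  have Hj' : j < r.+1 by rewrite ltnS.
  by move: (forallP (H (Ordinal Hi')) (Ordinal Hj')); rewrite -(fam_at_ord f).
- apply/forallP => j; rewrite -fam_at_ord; apply: H; rewrite -ltnS; exact: ltn_ord.
Qed.

Lemma valid_extend r m c (g : bfam r) : size c = r.+1 ->
  valid_family m (extend c g) = colv r m c && valid_family (mp m c) g.
Proof.
move=> Hc; apply/idP/idP.
- move/validP => H.
  have Hcol : forall i, 0 < i <= r.+1 -> inF ((m i)%:Z)%R (nth empty_entry c i.-1).
    move=> i /andP[H1 H2]; move: (H i r.+1 H2 (leqnn _)).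
    by rewrite H1 H2 mijE_col famE_col.
  apply/andP; split.
    apply/allP => k; rewrite mem_iota add0n => /andP[_ Hk].
    exact: (Hcol k.+1).
  apply/validP => i j Hi Hj; move: (H i j (leqW Hi) (leqW Hj)).
  rewrite famE_low //; case: ifP => // /andP[H1 H2].
  rewrite mijE_low //; apply: inF_le; apply: Hcol; rewrite H1 /=; lia.
- case/andP => /allP Hc' /validP Hg; apply/validP => i j Hi Hj.
  have Hcol : forall i, 0 < i <= r.+1 -> inF ((m i)%:Z)%R (nth empty_entry c i.-1).
    move=> i' /andP[H1 H2]; have := Hc' i'.-1; rewrite mem_iota add0n.
    rewrite prednK // => X; apply: X; rewrite H2 andbT //.
  case: (eqVneq j r.+1) => [->|Hne].
  + case: (posnP i) => [->|Hi0]; first by rewrite famE_col0.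
    by rewrite Hi mijE_col famE_col //; apply: Hcol; rewrite Hi0 Hi.
  + have Hj' : j <= r by move: Hj Hne; lia.
    rewrite famE_low //.
    case: (leqP i r) => Hir.
    * move: (Hg i j Hir Hj'); case: ifP => // /andP[H1 H2].
      rewrite mijE_low //; apply: inF_le; apply: Hcol; rewrite H1 /=; lia.
    * have -> : (1 <= i <= j) = false by apply/negbTE; lia.
      by rewrite fam_at_out //; lia.
Qed.

Lemma col_extend r c (g : bfam r) : size c = r.+1 -> col (extend c g) = c.
Proof.
move=> Hc; apply: (@eq_from_nth _ empty_entry); first by rewrite size_map size_iota Hc.
move=> k; rewrite size_map size_iota => Hk.
by rewrite (nth_map 0) ?size_iota // nth_iota // famE_col // add1n.
Qed.

Lemma res_extend r c (g : bfam r) : res (extend c g) = g.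
Proof.
apply/ffunP => -[i j]; rewrite ffunE /= famE_low ?fam_at_ord //.
by rewrite -ltnS ltn_ord.
Qed.

Lemma size_col r (f : bfam r.+1) : size (col f) = r.+1.
Proof. by rewrite size_map size_iota. Qed.

Lemma recompose r m (f : bfam r.+1) : valid_family m f -> extend (col f) (res f) = f.
Proof.
move/validP => H; apply/ffunP => -[i j]; rewrite ffunE /= /extE.
case: eqP => Hj.
- case: (posnP i) => Hi.
  + move: (H i j (ltn_ord i) (ltn_ord j)); rewrite fam_at_ord Hi /=.
    by move=> /eqP.
  + rewrite (nth_map 0) ?size_iota; last by move: (ltn_ord i); lia.
    rewrite nth_iota; last by move: (ltn_ord i); lia.
    by rewrite add1n prednK // -fam_at_ord Hj.
- rewrite fam_at_mk.
  have Hj' : j <= r by move: (ltn_ord j) Hj; lia.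
  rewrite Hj' andbT; case: leqP => Hir; first by rewrite fam_at_ord.
  move: (H i j (ltn_ord i) (ltn_ord j)).
  have -> : (1 <= i <= j) = false by apply/negbTE; lia.
  by rewrite fam_at_ord => /eqP.
Qed.

Fixpoint prodl (T : Type) (ls : seq (seq T)) : seq (seq T) :=
  if ls is l :: ls' then [seq x :: y | x <- l, y <- prodl ls'] else [:: [::]].

Lemma mem_prodl (T : eqType) x0 (ls : seq (seq T)) c :
  c \in prodl ls <-> size c = size ls /\ (forall k, k < size ls -> nth x0 c k \in nth [::] ls k).
Proof.
elim: ls c => [|l ls IH] c /=.
- rewrite inE; split => [/eqP -> //|[/size0nil -> _] //].
- split.
  + case/allpairsP => -[x y] /= [Hx Hy ->] /=; have [H1 H2] := (IH y).1 Hy.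
    split; first by rewrite H1.
    by case=> [|k] //= Hk; apply: H2.
  + case: c => [|x y] /= [Hs Hk]; first by []. 
    case: Hs => Hs; apply/allpairsP; exists (x, y) => /=.
    split => //; first by apply: (Hk 0).
    by apply/IH; split => // k Hk'; apply: (Hk k.+1).
Qed.

Lemma uniq_prodl (T : eqType) (ls : seq (seq T)) : all uniq ls -> uniq (prodl ls).
Proof.
elim: ls => [//|l ls IH] /= /andP[Hl Hls].
apply: allpairs_uniq => //; first exact: IH.
by move=> [x y] [x' y'] _ _ /= [-> ->].
Qed.

Lemma prodl_sum (T : Type) x0 (ls : seq (seq T)) (H : nat -> T -> nat) :
  \sum_(c <- prodl ls) \prod_(0 <= k < size ls) H k (nth x0 c k) =
  \prod_(0 <= k < size ls) \sum_(e <- nth [::] ls k) H k e.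
Proof.
elim: ls H => [|l ls IH] H /=; first by rewrite big_seq1 !big_geq.
rewrite big_allpairs_dep big_nat_recl //= big_distrl /=.
apply: eq_bigr => x _.
rewrite -(IH (fun k => H k.+1)) big_distrr /=.
by apply: eq_bigr => y _; rewrite big_nat_recl.
Qed.

Definition cols r (m : nat -> nat) : seq (seq entry) :=
  prodl [seq Flist (m i) | i <- iota 1 r.+1].

Lemma mem_cols r m c : c \in cols r m <-> size c = r.+1 /\ colv r m c.
Proof.
rewrite /cols (mem_prodl empty_entry) size_map size_iota.
split => -[Hs H]; split => //.
- apply/allP => k; rewrite mem_iota add0n => /andP[_ Hk].
  by move: (H k Hk); rewrite (nth_map 0) ?size_iota // nth_iota // mem_Flist inF_nat.
- move=> k Hk; move/allP: H => /(_ k); rewrite mem_iota add0n Hk => /(_ isT).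
  by rewrite (nth_map 0) ?size_iota // nth_iota // mem_Flist inF_nat.
Qed.

Fixpoint L (r : nat) : (nat -> nat) -> seq (bfam r) :=
  match r with
  | 0 => fun m => [:: mkfam 0 (fun _ _ => empty_entry)]
  | r'.+1 => fun m => [seq extend c g | c <- cols r' m, g <- L r' (mp m c)]
  end.

Definition Hf r (m : nat -> nat) (k : nat) (e : entry) : nat :=
  'C(r.+1, k.+1) ^ (m k.+1 - e.1) * 'C(r.+1, k) ^ e.1.

Lemma col_weight r m c : colv r m c ->
  \prod_(1 <= i < r.+1) 'C(r.+1, i) ^ mp m c i =
  \prod_(0 <= k < r.+1) Hf r m k (nth empty_entry c k).
Proof.
move=> /allP Hc.
have Hl : forall k, k < r.+1 -> (nth empty_entry c k).1 <= m k.+1.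
  by move=> k Hk; apply: inF_le; apply: Hc; rewrite mem_iota add0n Hk.
rewrite big_add1 /=.
rewrite (eq_big_nat _ _ (F2 := fun k => 'C(r.+1, k.+1) ^ (m k.+1 - (nth empty_entry c k).1)
     * 'C(r.+1, k.+1) ^ (nth empty_entry c k.+1).1)); last first.
  move=> k /andP[_ Hk]; rewrite -expnD /mp /=; congr (_ ^ _).
  have := Hl k (leqW Hk); lia.
rewrite big_split /= /Hf big_split /= big_nat_recr //= binn exp1n muln1.
by rewrite [in RHS](big_nat_recl _ _ _ (leq0n r)) bin0 exp1n mul1n.
Qed.

Lemma size_step r m (IH : forall m, size (L r m) = \prod_(1 <= i < r.+1) 'C(r.+1, i) ^ m i) :
  size (L r.+1 m) = \prod_(1 <= i < r.+2) 'C(r.+2, i) ^ m i.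
Proof.
rewrite /= size_allpairs_dep sumnE big_map.
rewrite (eq_big_seq (fun c => \prod_(0 <= k < r.+1) Hf r m k (nth empty_entry c k))); last first.
  by move=> c /mem_cols [_ Hc]; rewrite IH col_weight.
rewrite /cols.
have Hs : size [seq Flist (m i) | i <- iota 1 r.+1] = r.+1 by rewrite size_map size_iota.
have := prodl_sum empty_entry [seq Flist (m i) | i <- iota 1 r.+1] (Hf r m).
rewrite Hs => ->.
rewrite big_add1 /=; apply: eq_big_nat => k /andP[_ Hk].
rewrite -[Flist (m 1) :: _]/(map (fun i => Flist (m i)) (iota 1 r.+1)).
rewrite (nth_map 0) ?size_iota // nth_iota // add1n /Hf Flist_weight.
by rewrite -binS.
Qed.

Lemma mem_cols_size r m c : c \in cols r m -> size c = r.+1.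
Proof. by case/mem_cols. Qed.

Lemma L_spec r : forall m, [/\ uniq (L r m), forall f, (f \in L r m) = valid_family m f
   & size (L r m) = (\prod_(1 <= i < r.+1) 'C(r.+1, i) ^ m i)%N].
Proof.
elim: r => [|r IH] m.
- split => //=; last by rewrite big_geq.
  move=> f; rewrite inE; apply/eqP/idP.
  + move=> ->; apply/validP => i j; rewrite !leqn0 => /eqP -> /eqP ->.
    by rewrite /= fam_at_mk.
  + move/validP => H; apply/ffunP => -[i j]; rewrite ffunE /=.
    move: (H i j (ltn_ord i) (ltn_ord j)); rewrite fam_at_ord.
    by case: i j => [[|i] Hi] [[|j] Hj] //= /eqP ->.
- split.
  + rewrite /=; apply: allpairs_uniq_dep.
    * apply: uniq_prodl; apply/allP => l /mapP[i _ ->]; exact: uniq_Flist.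
    * by move=> c _; case: (IH (mp m c)).
    * move=> [c g] [c' g'] Hin Hin'; rewrite /= => E.
      have Hc : size c = r.+1.
        move: Hin => /flatten_mapP [x Hx] /mapP H; case: H => y Hy Exy.
        have Ec : c = x := congr1 tag Exy. by rewrite Ec; apply: mem_cols_size Hx.
      have Hc' : size c' = r.+1.
        move: Hin' => /flatten_mapP [x Hx] /mapP H; case: H => y Hy Exy.
        have Ec : c' = x := congr1 tag Exy. by rewrite Ec; apply: mem_cols_size Hx.
      have Ec : c = c' by rewrite -(col_extend g Hc) -(col_extend g' Hc') E.
      subst c'; by rewrite -(res_extend c g) E res_extend.
  + move=> f; apply/allpairsPdep/idP.
    * case=> c [g [Hc Hg ->]]; have [Hs Hcv] := (mem_cols _ _ _).1 Hc.
      rewrite valid_extend // Hcv /=; by case: (IH (mp m c)) => _ <- _.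
    * move=> Hf; exists (col f), (res f).
      have Hf' := Hf; rewrite -(recompose Hf') valid_extend ?size_col // in Hf.
      case/andP: Hf => Hcv Hv; split.
      - by apply/mem_cols; rewrite size_col.
      - by case: (IH (mp m (col f))) => _ ->.
      - by rewrite (recompose Hf').
  + by apply: size_step => m'; case: (IH m').
Qed.

Theorem proposition2p1 (r : nat) (m : nat -> nat) :
  exists s : seq (bfam r),
    [/\ uniq s,
        forall f : bfam r, (f \in s) = valid_family m f
      & size s = (\prod_(1 <= i < r.+1) 'C(r.+1, i) ^ m i)%N].
Proof. by exists (L r m); case: (L_spec r m). Qed.
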